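(* Let $G=(A,B;E)$ be the incidence graph of a finite set $A$ of points and a finite set $B$ of open axis-parallel rectangles in $\mathbb{R}^2$, and let $k$ be a positive integer. Then $G\otimes k$ is isomorphic to the incidence graph of some finite set of points and some finite set of open axis-parallel rectangles in $\mathbb{R}^2$.
   Context: The incidence graph of points $P$ and rectangles $\mathcal{R}$ is the bipartite graph with classes $P$, $\mathcal{R}$, where $p$ and $R$ are adjacent iff $p\in R$. For a bipartite graph $G=(A,B;E)$ and positive integer $k$, $G\otimes k$ is the bipartite graph with vertex classes $A\times[k]$ and $(B\times[k])\cup A'$, where $A'$ is a disjoint copy of $A$; $(u,i)\in A\times[k]$ and $(v,j)\in B\times[k]$ are adjacent iff $i=j$ and $\{u,v\}\in E$; $(u,i)\in A\times[k]$ and $v\in A'$ are adjacent iff $v$ is the copy of $u$; there are no other edges. *)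

(* Defs.v *)
From Stdlib Require Import Reals.
From mathcomp Require Import all_boot.
Set Implicit Arguments. Unset Strict Implicit. Unset Printing Implicit Defensive.

Record rect := Rect { rx1 : R; rx2 : R; ry1 : R; ry2 : R }.

Definition rect_ok (r : rect) : Prop := Rlt (rx1 r) (rx2 r) /\ Rlt (ry1 r) (ry2 r).

Definition in_rect (p : R * R) (r : rect) : Prop :=
  (Rlt (rx1 r) (fst p) /\ Rlt (fst p) (rx2 r)) /\
  (Rlt (ry1 r) (snd p) /\ Rlt (snd p) (ry2 r)).

(* A bipartite graph with classes A, B is given by its edge relation E : A -> B -> Prop. *)

Definition incidence (TP TQ : Type) (p : TP -> R * R) (r : TQ -> rect) : TP -> TQ -> Prop :=
  fun a b => in_rect (p a) (r b).

(* G (x) k : classes A x [k] and (B x [k]) + A' (inr a is the copy of a in A'). *)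
Definition tensor (A B : Type) (E : A -> B -> Prop) (k : nat) :
    A * 'I_k -> (B * 'I_k) + A -> Prop :=
  fun u v => match v with
             | inl (b, j) => snd u = j /\ E (fst u) b
             | inr a => fst u = a
             end.

Definition bip_iso (A1 B1 A2 B2 : Type) (E1 : A1 -> B1 -> Prop) (E2 : A2 -> B2 -> Prop) : Prop :=
  exists (f : A1 -> A2) (g : B1 -> B2),
    bijective f /\ bijective g /\ forall a b, E1 a b <-> E2 (f a) (g b).

Arguments tensor {A B} E k _ _.

(* Main.v *)
Require Import Defs.
From Stdlib Require Import Reals Lra.
From mathcomp Require Import all_boot.

Local Open Scope R_scope.

Lemma atan_lt_iff u v : atan u < atan v <-> u < v.
Proof.
split; last by apply: atan_increasing.
move=> H; destruct (Rlt_le_dec u v) as [h|h]; first by [].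
destruct (Rle_lt_or_eq_dec _ _ h) as [h'|h'].
- have := atan_increasing _ _ h'. lra.
- subst; lra.
Qed.

Lemma atan_inj u v : atan u = atan v -> u = v.
Proof.
move=> H; destruct (Rtotal_order u v) as [h|[h|h]]=>//.
- have := atan_increasing _ _ h; lra.
- have := atan_increasing _ _ h; lra.
Qed.

Lemma nat_sep (m n : nat) : m <> n -> INR m + 1 <= INR n \/ INR n + 1 <= INR m.
Proof.
move=> H; case: (ltngtP m n) => h.
- left; rewrite -S_INR; apply: le_INR; apply/leP; exact h.
- right; rewrite -S_INR; apply: le_INR; apply/leP; exact h.
- by move: H; rewrite h.
Qed.

Lemma sep_copy (k : nat) (i j : 'I_k) u v w :
  PI * INR j + atan u < PI * INR i + atan v ->
  PI * INR i + atan v < PI * INR j + atan w -> i = j.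
Proof.
move=> H1 H2; apply: val_inj => /=.
destruct (Nat.eq_dec i j) as [e|ne]; first by [].
have Hu := atan_bound u; have Hv := atan_bound v; have Hw := atan_bound w.
have HP := PI_RGT_0.
case: (nat_sep _ _ ne) => h.
- have: PI * (INR i + 1) <= PI * INR j by apply: Rmult_le_compat_l; lra.
  rewrite Rmult_plus_distr_l; lra.
- have: PI * (INR j + 1) <= PI * INR i by apply: Rmult_le_compat_l; lra.
  rewrite Rmult_plus_distr_l; lra.
Qed.

Lemma fin_gap (T : finType) (f : T -> R) :
  exists e, 0 < e /\ forall t, 0 < f t -> e <= f t.
Proof.
suff: forall s : seq T, exists e, 0 < e /\ forall t, t \in s -> 0 < f t -> e <= f t.
  move=> /(_ (enum T)) [e [he H]]; exists e; split=> // t; apply: H; by rewrite mem_enum.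
elim=> [|x s [e [he H]]].
  exists 1; split; [lra| by []].
destruct (Rlt_dec 0 (f x)) as [hx|hx].
- exists (Rmin e (f x)); split; first by apply: Rmin_pos.
  move=> t; rewrite in_cons => /orP [/eqP -> | Ht] Hf; first by apply: Rmin_r.
  apply: Rle_trans; [apply: Rmin_l | by apply: H].
- exists e; split=> // t; rewrite in_cons => /orP [/eqP -> | Ht] Hf; first by [].
  by apply: H.
Qed.

Local Close Scope R_scope.

Theorem lemma5p4 (TA TB : finType) (pA : TA -> R * R) (rB : TB -> rect)
    (injA : injective pA) (injB : injective rB) (okB : forall b, rect_ok (rB b))
    (k : nat) (hk : 0 < k) :
  exists (TP TQ : finType) (p : TP -> R * R) (r : TQ -> rect),
    [/\ injective p, injective r, (forall q, rect_ok (r q)) &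
        bip_iso (tensor (incidence pA rB) k) (incidence p r)].
Proof.
Local Open Scope R_scope.
pose V := (TA + (TB + TB))%type.
pose yv (v : V) := match v with inl a => snd (pA a)
                   | inr (inl b) => ry1 (rB b) | inr (inr b) => ry2 (rB b) end.
have [d [hd Hd]] := fin_gap _ (fun vw : (V * V)%type => Rabs (yv vw.1 - yv vw.2)).
have gap : forall v w, yv v <> yv w -> d <= Rabs (yv v - yv w).
  move=> v w ne; apply: (Hd (v, w)); simpl; apply: Rabs_pos_lt => h; apply: ne; lra.
have H1 : forall a c, snd (pA a) <> snd (pA c) -> d <= Rabs (snd (pA a) - snd (pA c)).
  by move=> a c; apply: (gap (inl a) (inl c)).
have H2 : forall a b, ry1 (rB b) < snd (pA a) -> d <= snd (pA a) - ry1 (rB b).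
  move=> a b h; have := gap (inl a) (inr (inl b)) ltac:(simpl; lra).
  rewrite /= Rabs_right; lra.
have H3 : forall a b, snd (pA a) < ry2 (rB b) -> d <= ry2 (rB b) - snd (pA a).
  move=> a b h; have := gap (inr (inr b)) (inl a) ltac:(simpl; lra).
  rewrite /= Rabs_right; lra.
have H4 : forall b, d <= ry2 (rB b) - ry1 (rB b).
  move=> b; have [_ ok] := okB b.
  have := gap (inr (inr b)) (inr (inl b)) ltac:(simpl; lra).
  rewrite /= Rabs_right; lra.
pose N := INR #|TA|.
have HN : 0 <= N by apply: pos_INR.
pose eta := d / (4 * (N + 1)).
have Heta : eta * (N + 1) = d / 4 by rewrite /eta; field; lra.
have eta_pos : 0 < eta.
  rewrite /eta; apply: Rdiv_lt_0_compat; lra.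
have eta_le : eta <= d / 4.
  rewrite -Heta; have := Rmult_le_compat_l eta 1 (N + 1) ltac:(lra) ltac:(lra); lra.
pose pe (a : TA) := eta * INR (enum_rank a).
have pe_bd : forall a, 0 <= pe a < d / 4.
  move=> a; have h1 := pos_INR (enum_rank a).
  have h2 : INR (enum_rank a) + 1 <= N.
    rewrite -S_INR; apply: le_INR; apply/leP; exact: ltn_ord.
  split; first by apply: Rmult_le_pos; lra.
  rewrite -Heta; apply: Rmult_lt_compat_l; lra.
have pe_sep : forall a c, a <> c -> pe a + eta <= pe c \/ pe c + eta <= pe a.
  move=> a c ne.
  have ne' : (enum_rank a : nat) <> enum_rank c.
    by move=> /val_inj /enum_rank_inj.
  case: (nat_sep _ _ ne') => h; [left|right];
  have := Rmult_le_compat_l eta _ _ ltac:(lra) h;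
  rewrite /pe Rmult_plus_distr_l; lra.
pose Y (a : TA) := snd (pA a) + pe a.
have Yiso : forall a c, Rabs (Y a - Y c) < eta / 2 -> a = c.
  move=> a c h.
  have [h1 h2] := Rabs_def2 _ _ h.
  have := pe_bd a; have := pe_bd c.
  rewrite /Y in h1 h2.
  destruct (Req_dec (snd (pA a)) (snd (pA c))) as [e|ne].
  - case: (eqVneq a c) => // /eqP ne _ _.
    case: (pe_sep a c ne); lra.
  - have := H1 a c ne.
    destruct (Rcase_abs (snd (pA a) - snd (pA c))) as [hl|hr].
    + rewrite Rabs_left //; lra.
    + rewrite Rabs_right //; lra.
have HP := PI_RGT_0.
have copy_eq : forall (i j : 'I_k) u v, PI * INR i + atan u = PI * INR j + atan v -> i = j /\ u = v.
  move=> i j u v e.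
  have ij : i = j.
    apply: val_inj => /=.
    destruct (Nat.eq_dec i j) as [e'|ne]; first by [].
    have Hu := atan_bound u; have Hv := atan_bound v.
    case: (nat_sep _ _ ne) => h.
    - have: PI * (INR i + 1) <= PI * INR j by apply: Rmult_le_compat_l; lra.
      rewrite Rmult_plus_distr_l; lra.
    - have: PI * (INR j + 1) <= PI * INR i by apply: Rmult_le_compat_l; lra.
      rewrite Rmult_plus_distr_l; lra.
  subst; split=> //; apply: atan_inj; lra.
have Xpos : forall (i : 'I_k) u, - PI / 2 < PI * INR i + atan u.
  move=> i u; have := atan_bound u; have := pos_INR i.
  have := Rmult_le_pos PI (INR i) ltac:(lra) (pos_INR i); lra.
have Xlt : forall (i : 'I_k) u, PI * INR i + atan u < PI * INR k - PI / 2.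
  move=> i u; have := atan_bound u.
  have h : INR i + 1 <= INR k by rewrite -S_INR; apply: le_INR; apply/leP; exact: ltn_ord.
  have: PI * (INR i + 1) <= PI * INR k by apply: Rmult_le_compat_l; lra.
  rewrite Rmult_plus_distr_l; lra.
pose p := fun ai : (TA * 'I_k)%type => (PI * INR ai.2 + atan (fst (pA ai.1)), Y ai.1).
pose r := fun q : ((TB * 'I_k) + TA)%type => match q with
  | inl (b, j) => Rect (PI * INR j + atan (rx1 (rB b))) (PI * INR j + atan (rx2 (rB b)))
                       (ry1 (rB b) + d / 4) (ry2 (rB b))
  | inr a => Rect (- PI) (PI * INR k) (Y a - eta / 2) (Y a + eta / 2) end.
exists (TA * 'I_k)%type, ((TB * 'I_k) + TA)%type, p, r; split.
- move=> [a i] [c j] [hx hy].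
  have ac : a = c by apply: Yiso; rewrite hy Rminus_diag Rabs_R0; lra.
  subst c; have [-> _] := copy_eq _ _ _ _ hx; by [].
- move=> [[b i]|a] [[c j]|a'] e; case: e.
  + move=> e1 e2 e3 e4.
    have [ij u1] := copy_eq _ _ _ _ e1.
    have [_ u2] := copy_eq _ _ _ _ e2.
    subst j.
    have bc : rB b = rB c.
      move: u1 u2 e3 e4; case: (rB b) => ? ? ? ?; case: (rB c) => ? ? ? ? /=.
      move=> -> -> e3 ->; congr Rect; lra.
    by rewrite (injB _ _ bc).
  + move=> e1 _ _ _; have := Xpos i (rx1 (rB b)); lra.
  + move=> e1 _ _ _; have := Xpos j (rx1 (rB c)); lra.
  + move=> e3 _; congr inr; apply: Yiso; rewrite /Y in e3 *.
    have -> : snd (pA a) + pe a - (snd (pA a') + pe a') = 0 by lra.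
    rewrite Rabs_R0; lra.
- move=> [[b j]|a]; rewrite /rect_ok /=.
  + have [o1 o2] := okB b; have := atan_increasing _ _ o1; have := H4 b; lra.
  + have := Xpos (Ordinal hk) 0; have := Xlt (Ordinal hk) 0; lra.
- exists (fun x => x), (fun x => x); split; [|split].
  + by apply: (Bijective (g := fun x => x)).
  + by apply: (Bijective (g := fun x => x)).
  +
  move=> [a i] [[b j]|c]; rewrite /tensor /incidence /in_rect /p /r /=.
  + split.
    * move=> [<- [[hx1 hx2] [hy1 hy2]]].
      have := atan_increasing _ _ hx1; have := atan_increasing _ _ hx2.
      have := H2 a b hy1; have := H3 a b hy2; have := pe_bd a; rewrite /Y; lra.
    * move=> [[hx1 hx2] [hy1 hy2]].
      have ij := sep_copy _ _ _ _ _ _ hx1 hx2; subst j; split=> //.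
      split; first split; try (apply/atan_lt_iff; lra).
      rewrite /Y in hy1 hy2; have := pe_bd a.
      have := H4 b.
      destruct (Rlt_le_dec (ry1 (rB b)) (snd (pA a))); last lra.
      lra.
  + split.
    * move=> <-; have := Xpos i (fst (pA a)); have := Xlt i (fst (pA a)); lra.
    * move=> [_ [hy1 hy2]]; apply: Yiso; apply: Rabs_def1; lra.
Qed.
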